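(* Let $(G,* )$ be a group and let $\mathcal{L},\mathcal{R}$ be families of subsets of $G$ such that: (1) whenever $x*y\in L\in\mathcal{L}$, there exist $L_x,L_y\in\mathcal{L}$ with $x\in L_x$, $y\in L_y$ and $L_x*L_y\subseteq L$; (2) whenever $x*y\in R\in\mathcal{R}$, there exist $R_x,R_y\in\mathcal{R}$ with $x\in R_x$, $y\in R_y$ and $R_x*R_y\subseteq R$. Equip $G$ with the topology generated by $\mathcal{L}\cup\mathcal{R}$ as a subbase and $G\times G$ with the product topology. Then the map $f:G\times G\to G$, $f(x,y)=x*y$, is continuous.
   Context: For $A,B\subseteq G$, $A*B=\{a*b : a\in A,\ b\in B\}$. *)

(* Defs.v *)
Set Implicit Arguments.

Definition setmul {G : Type} (mul : G -> G -> G) (A B : G -> Prop) : G -> Prop :=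
  fun z => exists a b, A a /\ B b /\ z = mul a b.

Definition subset {T : Type} (A B : T -> Prop) : Prop := forall x, A x -> B x.

Inductive gen_open {T : Type} (S : (T -> Prop) -> Prop) : (T -> Prop) -> Prop :=
| go_sub : forall A, S A -> gen_open S A
| go_full : gen_open S (fun _ => True)
| go_inter : forall A B, gen_open S A -> gen_open S B ->
    gen_open S (fun x => A x /\ B x)
| go_union : forall (F : (T -> Prop) -> Prop),
    (forall A, F A -> gen_open S A) ->
    gen_open S (fun x => exists A, F A /\ A x).

Definition fam_union {T : Type} (F1 F2 : (T -> Prop) -> Prop) : (T -> Prop) -> Prop :=
  fun A => F1 A \/ F2 A.

Definition prod_subbase {X Y : Type} (OX : (X -> Prop) -> Prop)
  (OY : (Y -> Prop) -> Prop) : (X * Y -> Prop) -> Prop :=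
  fun W => exists U V, OX U /\ OY V /\ W = (fun p => U (fst p) /\ V (snd p)).

Definition prod_open {X Y : Type} (OX : (X -> Prop) -> Prop)
  (OY : (Y -> Prop) -> Prop) : (X * Y -> Prop) -> Prop :=
  gen_open (prod_subbase OX OY).

Definition continuous_wrt {X Y : Type} (OX : (X -> Prop) -> Prop)
  (OY : (Y -> Prop) -> Prop) (f : X -> Y) : Prop :=
  forall W, OY W -> OX (fun x => W (f x)).

Definition split_family {G : Type} (mul : G -> G -> G)
  (F : (G -> Prop) -> Prop) : Prop :=
  forall (x y : G) (L : G -> Prop), F L -> L (mul x y) ->
    exists Lx Ly, F Lx /\ F Ly /\ Lx x /\ Ly y /\ subset (setmul mul Lx Ly) L.

(* Main.v *)
Require Import Defs.
From Stdlib Require Import FunctionalExtensionality PropExtensionality.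

Lemma open_ext {T : Type} (S : (T -> Prop) -> Prop) (A B : T -> Prop) :
  gen_open S A -> (forall x, A x <-> B x) -> gen_open S B.
Proof.
  intros H E. assert (A = B) as ->.
  { apply functional_extensionality; intro x; apply propositional_extensionality; auto. }
  exact H.
Qed.

Theorem proposition5p3 (G : Type) (mul : G -> G -> G) (e : G) (inv : G -> G)
  (mulA : forall x y z, mul x (mul y z) = mul (mul x y) z)
  (mul1g : forall x, mul e x = x)
  (mulVg : forall x, mul (inv x) x = e)
  (LL RR : (G -> Prop) -> Prop)
  (HL : split_family mul LL) (HR : split_family mul RR) :
  continuous_wrt
    (prod_open (gen_open (fam_union LL RR)) (gen_open (fam_union LL RR)))
    (gen_open (fam_union LL RR))
    (fun p : G * G => mul (fst p) (snd p)).
Proof.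
  intros W HW. unfold prod_open.
  induction HW as [A HA| |A B _ IHA _ IHB|F _ IH].
  -
    set (P := fun W' : G * G -> Prop =>
      prod_subbase (gen_open (fam_union LL RR)) (gen_open (fam_union LL RR)) W'
      /\ (forall p, W' p -> A (mul (fst p) (snd p)))).
    apply open_ext with (A := fun p => exists W', P W' /\ W' p).
    + apply go_union. intros W' [H _]. now apply go_sub.
    + intros [x y]; simpl; split.
      * intros [W' [[_ H] H']]. exact (H _ H').
      * intros Hxy.
        assert (exists Lx Ly, fam_union LL RR Lx /\ fam_union LL RR Ly /\ Lx x /\ Ly y
                 /\ subset (setmul mul Lx Ly) A) as [Lx [Ly [H1 [H2 [H3 [H4 H5]]]]]].
        { destruct HA as [HA|HA].
          - destruct (HL x y A HA Hxy) as [Lx [Ly [? [? [? [? ?]]]]]].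
            exists Lx, Ly; unfold fam_union; tauto.
          - destruct (HR x y A HA Hxy) as [Lx [Ly [? [? [? [? ?]]]]]].
            exists Lx, Ly; unfold fam_union; tauto. }
        exists (fun p => Lx (fst p) /\ Ly (snd p)). split; [split|].
        -- exists Lx, Ly. repeat split; try (apply go_sub; assumption).
        -- intros [a b] [Ha Hb]. apply H5. exists a, b. simpl. auto.
        -- simpl; auto.
  - apply go_full.
  - now apply go_inter.
  - apply open_ext with
      (A := fun p => exists B, (exists A, F A /\ B = (fun q => A (mul (fst q) (snd q)))) /\ B p).
    + apply go_union. intros B [A [HA ->]]. now apply IH.
    + intros p; split.
      * intros [B [[A [HA ->]] HB]]. eauto.
      * intros [A [HA HAp]]. exists (fun q => A (mul (fst q) (snd q))). eauto.
Qed.
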